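(* Let $(\mathcal V,\mathcal W,\lambda)$ be a FTvN system with center $C$. Then $C=\{u\in\mathcal V:[u]=\{u\}\}$.
   Context: A Fan-Theobald-von Neumann (FTvN) system is a triple $(\mathcal V,\mathcal W,\lambda)$ where $\mathcal V,\mathcal W$ are real inner product spaces and $\lambda:\mathcal V\to\mathcal W$ is a map such that: (A1) $\|\lambda(x)\|=\|x\|$ for all $x$; (A2) $\langle x,y\rangle\le\langle\lambda(x),\lambda(y)\rangle$ for all $x,y$; (A3) for every $c\in\mathcal V$ and $q\in\lambda(\mathcal V)$ there exists $x$ with $\lambda(x)=q$ and $\langle c,x\rangle=\langle\lambda(c),\lambda(x)\rangle$. The $\lambda$-orbit of $u$ is $[u]=\{x:\lambda(x)=\lambda(u)\}$. Elements $x,y$ commute if $\langle x,y\rangle=\langle\lambda(x),\lambda(y)\rangle$. The center $C$ is the set of elements of $\mathcal V$ commuting with every element of $\mathcal V$. *)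

(* Defs.v *)
From HB Require Import structures.
From mathcomp Require Import all_boot all_order all_algebra.
From mathcomp Require Import reals.
Set Implicit Arguments. Unset Strict Implicit. Unset Printing Implicit Defensive.
Import Order.TTheory GRing.Theory Num.Theory.
Local Open Scope ring_scope.

Record inner_product (R : realType) (V : lmodType R) := InnerProduct {
  ip :> V -> V -> R;
  ip_sym : forall x y, ip x y = ip y x;
  ip_linear : forall (a : R) x y z, ip (a *: x + y) z = a * ip x z + ip y z;
  ip_pos : forall x, x != 0 -> 0 < ip x x
}.

Definition ipnorm (R : realType) (V : lmodType R) (ipV : inner_product V) (x : V) : R :=
  Num.sqrt (ipV x x).

Definition FTvN_system (R : realType) (V W : lmodType R)
  (ipV : inner_product V) (ipW : inner_product W) (lam : V -> W) : Prop :=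
  [/\ (forall x, ipnorm ipW (lam x) = ipnorm ipV x),
      (forall x y, ipV x y <= ipW (lam x) (lam y)) &
      (forall (c : V) (q : W), (exists u, lam u = q) ->
         exists x, lam x = q /\ ipV c x = ipW (lam c) (lam x))].

(* lambda-orbit [u] = { x | lam x = lam u } *)
Definition lam_orbit (R : realType) (V W : lmodType R) (lam : V -> W) (u : V) : V -> Prop :=
  fun x => lam x = lam u.

Definition commute_ftvn (R : realType) (V W : lmodType R)
  (ipV : inner_product V) (ipW : inner_product W) (lam : V -> W) (x y : V) : Prop :=
  ipV x y = ipW (lam x) (lam y).

Definition center (R : realType) (V W : lmodType R)
  (ipV : inner_product V) (ipW : inner_product W) (lam : V -> W) : V -> Prop :=
  fun u => forall y, commute_ftvn ipV ipW lam u y.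

(* Main.v *)
Require Import Defs.
From mathcomp Require Import all_boot all_order all_algebra.
From mathcomp Require Import reals.
Import Order.TTheory GRing.Theory Num.Theory.
Local Open Scope ring_scope.

Section H.
Variables (R : realType) (V : lmodType R) (ip : inner_product V).

Lemma ip0l z : ip 0 z = 0.
Proof.
have := ip_linear ip 1 0 0 z; rewrite scale1r addr0 mul1r => h.
by apply: (@addrI _ (ip 0 z)); rewrite addr0 -h.
Qed.

Lemma ipDl x y z : ip (x + y) z = ip x z + ip y z.
Proof. by have := ip_linear ip 1 x y z; rewrite scale1r mul1r. Qed.

Lemma ipNl x z : ip (- x) z = - ip x z.
Proof. by have := ip_linear ip (-1) x 0 z; rewrite addr0 ip0l addr0 scaleN1r mulN1r. Qed.

Lemma ipge0 x : 0 <= ip x x.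
Proof.
have [->|/(ip_pos ip)/ltW //] := eqVneq x 0; by rewrite ip0l.
Qed.

Lemma ip_eq0 x : ip x x = 0 -> x = 0.
Proof.
have [//|/(ip_pos ip)] := eqVneq x 0; by move=> h e; rewrite e ltxx in h.
Qed.

Lemma ip_sub x u : ip (x - u) (x - u) = ip x x - ip x u - ip u x + ip u u.
Proof.
rewrite ipDl ipNl ![ip _ (x - u)]ip_sym !ipDl !ipNl.
rewrite (ip_sym ip x u) (ip_sym ip u x).
by rewrite opprD opprK !addrA.
Qed.
End H.

Theorem proposition6p3 (R : realType) (V W : lmodType R)
  (ipV : inner_product V) (ipW : inner_product W) (lam : V -> W) :
  FTvN_system ipV ipW lam ->
  forall u : V, center ipV ipW lam u <-> (forall x : V, lam_orbit lam u x <-> x = u).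
Proof.
move=> [A1 A2 A3] u; split.
- move=> Cu x; split; last by move=> ->.
  rewrite /lam_orbit => ex.
  have nx : ipV x x = ipV u u.
    have h1 := A1 x; have h2 := A1 u; rewrite /ipnorm ex in h1.
    have : Num.sqrt (ipV x x) = Num.sqrt (ipV u u) by rewrite -h1; exact: h2.
    by move/eqP; rewrite eqr_sqrt ?ipge0 // => /eqP.
  have nl : ipW (lam u) (lam u) = ipV u u.
    have h2 := A1 u; rewrite /ipnorm in h2.
    by move/eqP: h2; rewrite eqr_sqrt ?ipge0 // => /eqP.
  have c1 : ipV u x = ipV u u by rewrite Cu /commute_ftvn ex; exact: nl.
  have c2 : ipV x u = ipV u u by rewrite ip_sym.
  apply/eqP; rewrite -subr_eq0; apply/eqP; apply: (@ip_eq0 _ _ ipV).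
  by rewrite ip_sub nx c1 c2 subrr sub0r addNr.
- move=> Hor y; rewrite /commute_ftvn.
  have [x [ex exy]] := A3 y (lam u) (ex_intro _ u erefl).
  have xu : x = u by apply/Hor.
  by rewrite xu in exy; rewrite (ip_sym ipV) exy (ip_sym ipW).
Qed.
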